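(* Let $m\ge 2$, let $A=(A(i,j))_{i,j=0}^{m-1}$ be a primitive matrix with entries in $\{0,1\}$, and let $q>1$. Then there exists a unique vector $(t_i)_{i=0}^{m-1}$ satisfying $$t_i^q = \sum_{j=0}^{m-1} A(i,j)\, t_j,\qquad t_i>1,\qquad i=0,\dots,m-1.$$
   Context: A non-negative matrix is primitive if some power of it has all entries strictly positive. *)

(* Defs.v *)
From Stdlib Require Export Reals.
Open Scope R_scope.

Fixpoint rsum (n : nat) (f : nat -> R) : R :=
  match n with
  | O => 0
  | S n' => rsum n' f + f n'
  end.

Fixpoint matpow (m : nat) (A : nat -> nat -> R) (k : nat) : nat -> nat -> R :=
  match k with
  | O => fun i j => if Nat.eqb i j then 1 else 0
  | S k' => fun i j => rsum m (fun l => matpow m A k' i l * A l j)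
  end.

Definition nonneg_matrix (m : nat) (A : nat -> nat -> R) : Prop :=
  forall i j, (i < m)%nat -> (j < m)%nat -> 0 <= A i j.

Definition primitive_matrix (m : nat) (A : nat -> nat -> R) : Prop :=
  nonneg_matrix m A /\
  exists k : nat, forall i j, (i < m)%nat -> (j < m)%nat -> 0 < matpow m A k i j.

Definition zero_one_matrix (m : nat) (A : nat -> nat -> R) : Prop :=
  forall i j, (i < m)%nat -> (j < m)%nat -> A i j = 0 \/ A i j = 1.

Definition solves (m : nat) (A : nat -> nat -> R) (q : R) (t : nat -> R) : Prop :=
  forall i, (i < m)%nat ->
    1 < t i /\ Rpower (t i) q = rsum m (fun j => A i j * t j).

(* Main.v *)
Require Import Defs.
From Stdlib Require Import Reals Lra Lia Arith.
Open Scope R_scope.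

Lemma rsum_ext n f g : (forall p, (p < n)%nat -> f p = g p) -> rsum n f = rsum n g.
Proof. induction n; simpl; intros H; auto. rewrite IHn; [rewrite H|]; auto; intros; apply H; lia. Qed.

Lemma rsum_le n f g : (forall p, (p < n)%nat -> f p <= g p) -> rsum n f <= rsum n g.
Proof. induction n; simpl; intros H; [lra|]. assert (f n <= g n) by (apply H; lia).
 assert (rsum n f <= rsum n g) by (apply IHn; intros; apply H; lia). lra. Qed.

Lemma rsum_scal n c f : rsum n (fun j => c * f j) = c * rsum n f.
Proof. induction n; simpl; [ring|]. rewrite IHn; ring. Qed.

Lemma rsum_nonneg n f : (forall p, (p < n)%nat -> 0 <= f p) -> 0 <= rsum n f.
Proof. intros H. apply Rle_trans with (rsum n (fun _ => 0)).
 - clear H; induction n; simpl; lra.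
 - apply rsum_le; auto. Qed.

Lemma rsum_ge_term n f p : (forall p, (p < n)%nat -> 0 <= f p) -> (p < n)%nat -> f p <= rsum n f.
Proof. induction n; intros H Hp; [lia|]. simpl.
 assert (0 <= f n) by (apply H; lia).
 destruct (Nat.eq_dec p n).
 - subst. assert (0 <= rsum n f) by (apply rsum_nonneg; intros; apply H; lia). lra.
 - assert (f p <= rsum n f) by (apply IHn; [intros; apply H|]; lia). lra. Qed.

Lemma rsum_zero n f : (forall p, (p < n)%nat -> f p = 0) -> rsum n f = 0.
Proof. intros H. rewrite (rsum_ext n f (fun _ => 0)) by auto. clear H; induction n; simpl; lra. Qed.

Lemma rsum_ind n j g : (j < n)%nat -> rsum n (fun l => (if Nat.eqb j l then 1 else 0) * g l) = g j.
Proof. induction n; intros Hj; [lia|]. simpl. destruct (Nat.eq_dec j n).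
 - subst. rewrite Nat.eqb_refl. rewrite rsum_zero; [ring|].
   intros p Hp. destruct (Nat.eqb_spec n p); [lia|ring].
 - rewrite IHn by lia. destruct (Nat.eqb_spec j n); [lia|ring]. Qed.

Lemma row_lemma n f u : (forall p, (p < n)%nat -> f p = 0 \/ f p = 1) ->
  (forall p, (p < n)%nat -> 1 <= u p) -> rsum n (fun p => f p * u p) <= 1 ->
  (forall p, (p < n)%nat -> f p = 0) \/
  (exists j, (j < n)%nat /\ u j = 1 /\ forall p, (p < n)%nat -> f p = if Nat.eqb j p then 1 else 0).
Proof.
  induction n; intros Hf Hu Hs; [left; intros; lia|]. simpl in Hs.
  assert (Hnn : 0 <= rsum n (fun p => f p * u p)).
  { apply rsum_nonneg. intros p Hp. destruct (Hf p ltac:(lia)) as [E|E]; rewrite E;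
    assert (1 <= u p) by (apply Hu; lia); lra. }
  assert (Hun : 1 <= u n) by (apply Hu; lia).
  destruct (Hf n ltac:(lia)) as [E|E]; rewrite E in Hs.
  - destruct IHn as [H|[j [Hj [Hu1 H]]]].
    + intros; apply Hf; lia.
    + intros; apply Hu; lia.
    + lra.
    + left. intros p Hp. destruct (Nat.eq_dec p n); [subst; auto|apply H; lia].
    + right. exists j. split; [lia|split; auto]. intros p Hp.
      destruct (Nat.eq_dec p n); [subst; destruct (Nat.eqb_spec j n); [lia|auto]|apply H; lia].
  - right. exists n. split; [lia|]. split; [lra|]. intros p Hp.
    destruct (Nat.eq_dec p n).
    + subst. rewrite Nat.eqb_refl; auto.
    + destruct (Nat.eqb_spec n p); [lia|].
      destruct (Hf p ltac:(lia)) as [E'|E']; auto.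
      assert (f p * u p <= rsum n (fun p => f p * u p)).
      { apply (rsum_ge_term n (fun p => f p * u p)); [|lia]. intros p' Hp'. destruct (Hf p' ltac:(lia)) as [E2|E2]; rewrite E2;
        assert (1 <= u p') by (apply Hu; lia); lra. }
      rewrite E' in H. assert (1 <= u p) by (apply Hu; lia). lra.
Qed.

Lemma argmax n g : (0 < n)%nat -> exists i0, (i0 < n)%nat /\ forall i, (i < n)%nat -> g i <= g i0.
Proof. induction n; intros H; [lia|]. destruct n.
 - exists 0%nat. split; [lia|]. intros i Hi. replace i with 0%nat by lia. lra.
 - destruct IHn as [i0 [Hi0 Hm]]; [lia|]. destruct (Rle_dec (g (S n)) (g i0)).
   + exists i0. split; [lia|]. intros i Hi. destruct (Nat.eq_dec i (S n)); [subst; auto|apply Hm; lia].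
   + exists (S n). split; [lia|]. intros i Hi. destruct (Nat.eq_dec i (S n)); [subst; lra|].
     assert (g i <= g i0) by (apply Hm; lia). lra.
Qed.

Lemma uniq_le m A q s t : (0 < m)%nat -> zero_one_matrix m A -> 1 < q ->
  solves m A q s -> solves m A q t -> forall i, (i < m)%nat -> s i <= t i.
Proof.
  intros Hm HA Hq Hs Ht.
  destruct (argmax m (fun i => s i / t i) Hm) as [i0 [Hi0 Hmax]].
  set (c := s i0 / t i0) in *.
  assert (Htp : forall i, (i < m)%nat -> 0 < t i) by (intros i Hi; destruct (Ht i Hi); lra).
  assert (Hsp : forall i, (i < m)%nat -> 0 < s i) by (intros i Hi; destruct (Hs i Hi); lra).
  assert (Hc : c <= 1).
  { destruct (Rle_dec c 1) as [|Hc]; auto. exfalso.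
    assert (Hle : forall j, (j < m)%nat -> s j <= c * t j).
    { intros j Hj. specialize (Hmax j Hj). simpl in Hmax. specialize (Htp j Hj).
      apply Rmult_le_reg_r with (/ t j). apply Rinv_0_lt_compat; lra.
      replace (c * t j * / t j) with c by (field; lra). exact Hmax. }
    destruct (Hs i0 Hi0) as [_ E1]. destruct (Ht i0 Hi0) as [_ E2].
    assert (Hr : rsum m (fun j => A i0 j * s j) <= c * rsum m (fun j => A i0 j * t j)).
    { rewrite <- rsum_scal. apply rsum_le. intros p Hp.
      destruct (HA i0 p Hi0 Hp) as [E|E]; rewrite E; [lra|]. specialize (Hle p Hp); lra. }
    rewrite <- E1, <- E2 in Hr.
    assert (Hsi : s i0 = c * t i0) by (unfold c; field; specialize (Htp i0 Hi0); lra).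
    rewrite Hsi, <- Rpower_mult_distr in Hr by (try apply Htp; auto; lra).
    assert (Hcq : c < Rpower c q).
    { replace q with (1 + (q - 1)) by ring. rewrite Rpower_plus, Rpower_1 by lra.
      assert (1 < Rpower c (q-1)).
      { rewrite <- (Rpower_O c) at 1 by lra. apply Rpower_lt; lra. }
      nra. }
    assert (0 < Rpower (t i0) q) by (unfold Rpower; apply exp_pos).
    nra. }
  intros i Hi. specialize (Hmax i Hi). simpl in Hmax. specialize (Htp i Hi).
  assert (s i / t i <= 1) by lra.
  apply Rmult_le_reg_r with (/ t i). apply Rinv_0_lt_compat; lra.
  replace (t i * / t i) with 1 by (field; lra). exact H.
Qed.

Definition Fm m (A : nat -> nat -> R) q (x : nat -> R) j :=
  if lt_dec j m then Rpower (Rmax 1 (rsum m (fun p => A j p * x p))) (/ q) else 1.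

Lemma rsum_const n c : rsum n (fun _ => c) = INR n * c.
Proof. induction n; simpl rsum; [simpl; ring|]. rewrite IHn, S_INR; ring. Qed.

Lemma Rpower_ge1 a c : 1 <= a -> 0 <= c -> 1 <= Rpower a c.
Proof. intros. rewrite <- (Rpower_O a) by lra. apply Rle_Rpower; lra. Qed.

Lemma Fm_ge1 m A q x j : 1 < q -> 1 <= Fm m A q x j.
Proof. intros Hq. unfold Fm. destruct lt_dec; [|lra]. apply Rpower_ge1.
  apply Rmax_l. left; apply Rinv_0_lt_compat; lra. Qed.

Lemma Fm_mono m A q x y : zero_one_matrix m A -> 1 < q ->
  (forall j, (j < m)%nat -> x j <= y j) -> forall j, Fm m A q x j <= Fm m A q y j.
Proof. intros HA Hq H j. unfold Fm. destruct lt_dec; [|lra].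
  apply Rle_Rpower_l. left; apply Rinv_0_lt_compat; lra.
  assert (rsum m (fun p => A j p * x p) <= rsum m (fun p => A j p * y p)).
  { apply rsum_le. intros p Hp. destruct (HA j p l Hp) as [E|E]; rewrite E; specialize (H p Hp); lra. }
  unfold Rmax. split; [destruct Rle_dec; lra|]. repeat destruct Rle_dec; lra. Qed.

Lemma Fm_bound m A q x M : zero_one_matrix m A -> 1 < q -> 1 <= M -> (1 <= INR m) ->
  Rpower M q = INR m * M -> (forall j, (j < m)%nat -> x j <= M) -> forall j, Fm m A q x j <= M.
Proof. intros HA Hq HM Hm HMq H j. unfold Fm. destruct lt_dec; [|lra].
  assert (Hs : rsum m (fun p => A j p * x p) <= INR m * M).
  { rewrite <- rsum_const. apply rsum_le. intros p Hp. destruct (HA j p l Hp) as [E|E]; rewrite E; specialize (H p Hp); lra. }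
  apply Rle_trans with (Rpower (INR m * M) (/ q)).
  - apply Rle_Rpower_l. left; apply Rinv_0_lt_compat; lra.
    unfold Rmax. split; [destruct Rle_dec; lra|]. destruct Rle_dec; nra.
  - rewrite <- HMq, Rpower_mult. replace (q * / q) with 1 by (field; lra). rewrite Rpower_1; lra.
Qed.

Lemma exists_fix m A q : (2 <= m)%nat -> zero_one_matrix m A -> 1 < q ->
  exists t, (forall j, 1 <= t j) /\ forall j, t j = Fm m A q t j.
Proof.
  intros Hm HA Hq.
  assert (Hm1 : 1 <= INR m) by (apply (le_INR 1); lia).
  set (M := Rpower (INR m) (/ (q - 1))).
  assert (HM : 1 <= M) by (apply Rpower_ge1; [lra|left; apply Rinv_0_lt_compat; lra]).
  assert (HMq : Rpower M q = INR m * M).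
  { replace q with ((q - 1) + 1) at 1 by ring. rewrite Rpower_plus, Rpower_1 by lra.
    unfold M at 1. rewrite Rpower_mult. replace (/ (q-1) * (q-1)) with 1 by (field; lra).
    rewrite Rpower_1; lra. }
  set (S := fun x : nat -> R => forall j, 1 <= x j <= M /\ x j <= Fm m A q x j).
  set (E := fun i y => exists x, S x /\ y = x i).
  assert (H1 : S (fun _ => 1)).
  { intros j. split; [lra|]. apply Fm_ge1; lra. }
  assert (Hlub : forall i, { l | is_lub (E i) l }).
  { intros i. apply completeness.
    - exists M. intros y [x [Sx ->]]. apply (proj2 (proj1 (Sx i))).
    - exists 1. exists (fun _ => 1). auto. }
  set (t := fun i => proj1_sig (Hlub i)).
  assert (Ht : forall i, is_lub (E i) (t i)) by (intros i; unfold t; destruct (Hlub i); auto).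
  assert (Hxt : forall x, S x -> forall j, x j <= t j).
  { intros x Sx j. apply (proj1 (Ht j)). exists x; auto. }
  assert (Ht1 : forall j, 1 <= t j) by (intros j; apply (Hxt _ H1)).
  assert (HtM : forall j, t j <= M).
  { intros j. apply (proj2 (Ht j)). intros y [x [Sx ->]]. apply (proj2 (proj1 (Sx j))). }
  assert (Htle : forall j, t j <= Fm m A q t j).
  { intros j. apply (proj2 (Ht j)). intros y [x [Sx ->]].
    apply Rle_trans with (Fm m A q x j); [apply (proj2 (Sx j))|].
    apply Fm_mono; auto. }
  assert (SF : S (Fm m A q t)).
  { intros j. split; [split|].
    - apply Fm_ge1; lra.
    - apply Fm_bound; auto.
    - apply Fm_mono; auto. }
  exists t. split; auto. intros j. apply Rle_antisym; auto.
Qed.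

Theorem lemma1p2 (m : nat) (A : nat -> nat -> R) (q : R) :
  le 2 m -> zero_one_matrix m A -> primitive_matrix m A -> 1 < q ->
  exists t : nat -> R, solves m A q t /\
    (forall s : nat -> R, solves m A q s -> forall i, lt i m -> s i = t i).
Proof.
  intros Hm HA [_ [k Hk]] Hq.
  destruct (exists_fix m A q Hm HA Hq) as [t [Ht1 Hfix]].
  assert (Hpow : forall i, (i < m)%nat ->
     Rpower (t i) q = Rmax 1 (rsum m (fun p => A i p * t p))).
  { intros i Hi. rewrite Hfix. unfold Fm. destruct lt_dec; [|lia].
    rewrite Rpower_mult. replace (/ q * q) with 1 by (field; lra).
    apply Rpower_1. unfold Rmax; destruct Rle_dec; lra. }
  assert (Hrow : forall i, (i < m)%nat -> t i = 1 ->
    (forall p, (p < m)%nat -> A i p = 0) \/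
    (exists j, (j < m)%nat /\ t j = 1 /\ forall p, (p < m)%nat -> A i p = if Nat.eqb j p then 1 else 0)).
  { intros i Hi Eti. apply row_lemma.
    - intros; apply HA; auto.
    - intros; apply Ht1.
    - specialize (Hpow i Hi). rewrite Eti in Hpow. unfold Rpower in Hpow.
      rewrite ln_1, Rmult_0_r, exp_0 in Hpow.
      pose proof (Rmax_r 1 (rsum m (fun p => A i p * t p))). lra. }
  assert (Hinv : forall k i, (i < m)%nat -> t i = 1 ->
    (forall p, (p < m)%nat -> matpow m A k i p = 0) \/
    (exists j, (j < m)%nat /\ t j = 1 /\ forall p, (p < m)%nat -> matpow m A k i p = if Nat.eqb j p then 1 else 0)).
  { induction k0 as [|k0 IH]; intros i Hi Eti.
    - right. exists i. split; auto.
    - destruct (IH i Hi Eti) as [Z|[j [Hj [Etj Hind]]]].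
      + left. intros p Hp. simpl. apply rsum_zero. intros l Hl. rewrite Z by auto. ring.
      + assert (Hmp : forall p, (p < m)%nat -> matpow m A (S k0) i p = A j p).
        { intros p Hp. simpl. rewrite <- (rsum_ind m j (fun l => A l p)) by auto.
          apply rsum_ext. intros l Hl. rewrite Hind; auto. }
        destruct (Hrow j Hj Etj) as [Z|[j' [Hj' [Etj' Hind']]]].
        * left. intros p Hp. rewrite Hmp, Z; auto.
        * right. exists j'. split; auto. split; auto. intros p Hp. rewrite Hmp; auto. }
  assert (Hgt : forall i, (i < m)%nat -> 1 < t i).
  { intros i Hi. destruct (Rle_lt_or_eq_dec 1 (t i) (Ht1 i)) as [|E]; auto. exfalso.
    destruct (Hinv k i Hi (eq_sym E)) as [Z|[j [Hj [_ Hind]]]].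
    - specialize (Hk i 0%nat Hi ltac:(lia)). rewrite Z in Hk by lia. lra.
    - set (p := if Nat.eqb j 0 then 1%nat else 0%nat).
      assert (Hp : (p < m)%nat) by (unfold p; destruct (Nat.eqb j 0); lia).
      assert (Hjp : Nat.eqb j p = false).
      { unfold p. destruct (Nat.eqb_spec j 0); apply Nat.eqb_neq; lia. }
      specialize (Hk i p Hi Hp). rewrite Hind, Hjp in Hk by auto. lra. }
  assert (Hsol : solves m A q t).
  { intros i Hi. split; auto. rewrite Hpow by auto.
    unfold Rmax. destruct Rle_dec as [|Hn]; auto. exfalso.
    assert (E : Rpower (t i) q = 1).
    { rewrite Hpow by auto. unfold Rmax. destruct Rle_dec; [contradiction|reflexivity]. }
    assert (Rpower (t i) 0 < Rpower (t i) q) by (apply Rpower_lt; auto; lra).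
    rewrite Rpower_O in H by (specialize (Hgt i Hi); lra). lra. }
  exists t. split; auto.
  intros s Hs i Hi. apply Rle_antisym; apply uniq_le with m A q; auto; lia.
Qed.
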